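(* Let $a\neq b$ be decimal digits and $n\ge 2$, and suppose $B_n(a,b)$ is an absolute prime. Let $p$ be a prime such that $n>p-1$, $10$ is a primitive root modulo $p$ (i.e. $h(p)=p-1$), and $\gcd(a,p)=1$. Then $(p-1)\mid n$.
   Context: For a positive integer $N$ with decimal representation $d_1d_2\dots d_n$ (digits $d_k\in\{0,\dots,9\}$, $d_1\neq 0$), a permutation of the digits of $N$ is any integer $\sum_{k=1}^{n} d_{\sigma(k)}10^{n-k}$ with $\sigma$ a permutation of $\{1,\dots,n\}$. $N$ is called an absolute prime if every integer obtained by a permutation of the digits of $N$ (including $N$ itself) is prime. The repunit $A_n=(10^n-1)/9$ is the $n$-digit integer all of whose digits are $1$. For digits $a,b$ and $n\ge 1$, $B_n(a,b)=a\cdot A_n+(b-a)$ is the $n$-digit integer whose first $n-1$ digits are $a$ and whose last digit is $b$. For a prime $p\notin\{2,5\}$, $h(p)$ denotes the multiplicative order of $10$ modulo $p$; $10$ is a primitive root modulo $p$ when $h(p)=p-1$. *)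

(* Defs.v *)
From mathcomp Require Import all_boot.
Set Implicit Arguments. Unset Strict Implicit. Unset Printing Implicit Defensive.

(* Integer with decimal digit list s (most significant first): sum_k s_k 10^(n-k). *)
Definition fromdigits (s : seq nat) : nat := foldl (fun acc d => acc * 10 + d) 0 s.

Definition decimal_rep (N : nat) (s : seq nat) : Prop :=
  [/\ all (fun d => d < 10) s, head 0 s != 0 & fromdigits s = N].

Definition absolute_prime (N : nat) : Prop :=
  exists s, decimal_rep N s /\ forall t, perm_eq t s -> prime (fromdigits t).

Definition repunit (n : nat) : nat := (10 ^ n - 1) %/ 9.

(* B_n(a,b) = a*A_n + (b - a): first n-1 digits a, last digit b (n >= 1). *)
Definition B (n a b : nat) : nat := a * repunit n + b - a.

Definition is_order10 (p h : nat) : Prop :=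
  [/\ 0 < h, 10 ^ h %% p = 1 %% p & forall k, 0 < k < h -> 10 ^ k %% p != 1 %% p].

(* Main.v *)
Require Import Defs.
From mathcomp Require Import all_boot all_algebra zify ring.
Import GRing.Theory.

Lemma foldlE (s : seq nat) z :
  foldl (fun acc d => acc * 10 + d) z s = z * 10 ^ size s + fromdigits s.
Proof.
elim: s z => [|x s IH] z /=; first by rewrite /fromdigits /= expn0 muln1 addn0.
rewrite /fromdigits /= IH mul0n add0n -/(fromdigits s) IH expnS; nia.
Qed.

Lemma fd_cons x s : fromdigits (x :: s) = x * 10 ^ size s + fromdigits s.
Proof. by rewrite /fromdigits /= mul0n add0n foldlE. Qed.

Lemma fd_cat s t : fromdigits (s ++ t) = fromdigits s * 10 ^ size t + fromdigits t.
Proof. by rewrite /fromdigits foldl_cat foldlE. Qed.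

Lemma fd_rcons s x : fromdigits (rcons s x) = fromdigits s * 10 + x.
Proof. by rewrite /fromdigits foldl_rcons. Qed.

Definition F k := fromdigits (nseq k 1).

Lemma fd_nseq k a : fromdigits (nseq k a) = a * F k.
Proof.
rewrite /F; elim: k => [|k IH] /=; first by rewrite muln0.
by rewrite !fd_cons !size_nseq IH; nia.
Qed.

Lemma F9 k : 9 * F k + 1 = 10 ^ k.
Proof.
rewrite /F; elim: k => [|k IH] //=.
rewrite fd_cons size_nseq expnS; nia.
Qed.

Lemma repunitE k : repunit k = F k.
Proof. by rewrite /repunit -F9 addnK mulKn. Qed.

Lemma FD m j : F (m + j) = F m * 10 ^ j + F j.
Proof. by rewrite /F nseqD fd_cat size_nseq. Qed.

Lemma FS j : F j.+1 = F j * 10 + 1.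
Proof. by rewrite -addn1 FD. Qed.

Lemma F_ge j : j <= F j.
Proof. elim: j => [|j IH] //; rewrite FS; lia. Qed.

Lemma fd_lt s : all (fun d => d < 10) s -> fromdigits s < 10 ^ size s.
Proof.
elim/last_ind: s => [|s x IH] //.
rewrite all_rcons fd_rcons size_rcons expnS => /andP [hx hs].
have := IH hs; nia.
Qed.

Lemma fd_ge x s : 0 < x -> 10 ^ size s <= fromdigits (x :: s).
Proof. rewrite fd_cons; nia. Qed.

Lemma fd_same s t : all (fun d => d < 10) s -> all (fun d => d < 10) t ->
  size s = size t -> fromdigits s = fromdigits t -> s = t.
Proof.
elim/last_ind: s t => [|s x IH] t.
  by case: t.
case/lastP: t => [|t y]; first by rewrite size_rcons.
rewrite !all_rcons !fd_rcons !size_rcons => /andP [hx hs] /andP [hy ht] [hsz] e.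
have exy : x = y by lia.
have e2 : fromdigits s = fromdigits t by lia.
by rewrite (IH t hs ht hsz e2) exy.
Qed.

Lemma fd_uniq s t : all (fun d => d < 10) s -> all (fun d => d < 10) t ->
  head 0 s != 0 -> head 0 t != 0 -> fromdigits s = fromdigits t -> s = t.
Proof.
move=> hs ht h0s h0t e; apply: fd_same => //.
case: s hs h0s e => [|x s] //; case: t ht h0t => [|y t] //= /andP[hy ht] hy0 /andP[hx hs] hx0 e.
have l1 : fromdigits (x::s) < 10^(size s).+1.
  by apply: (@fd_lt (x::s)); rewrite /= hx hs.
have l2 : fromdigits (y::t) < 10^(size t).+1.
  by apply: (@fd_lt (y::t)); rewrite /= hy ht.
have g1 := @fd_ge x s; have g2 := @fd_ge y t.
rewrite lt0n hx0 in g1; rewrite lt0n hy0 in g2.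
have g1' := g1 erefl; have g2' := g2 erefl.
congr S; apply/eqP; case: (ltngtP (size s) (size t)) => // h.
  have : 10 ^ (size s).+1 <= 10 ^ size t by rewrite leq_exp2l.
  lia.
have : 10 ^ (size t).+1 <= 10 ^ size s by rewrite leq_exp2l.
lia.
Qed.

Lemma castP p m k : prime p -> ((m%:R : 'F_p) = k%:R)%R <-> m %% p = k %% p.
Proof.
move=> pr; split => e.
  by have := congr1 (fun z : 'F_p => nat_of_ord z) e; rewrite /= !val_Fp_nat.
by rewrite -(Fp_nat_mod pr m) e Fp_nat_mod.
Qed.

Lemma pow_neq1 p d : prime p -> (forall k, 0 < k < p.-1 -> 10 ^ k %% p != 1 %% p) ->
  0 < d < p.-1 -> ((10%:R : 'F_p) ^+ d != 1)%R.
Proof.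
move=> pr Hk hd; rewrite -natrX; apply/eqP => e.
have e1 : (1 : 'F_p)%R = 1%:R%R by [].
move/(castP p (10 ^ d) 1 pr): e => e.
by move: (Hk d hd); rewrite e eqxx.
Qed.

Lemma gen p : prime p -> (forall k, 0 < k < p.-1 -> 10 ^ k %% p != 1 %% p) ->
  ((10%:R : 'F_p) != 0)%R -> forall x : 'F_p, (x != 0)%R ->
  exists2 k, k < p.-1 & ((10%:R : 'F_p) ^+ k = x)%R.
Proof.
move=> pr Hk t0 x x0.
pose f (i : 'I_p.-1) : 'F_p := ((10%:R : 'F_p) ^+ i)%R.
have finj : injective f.
  move=> i j; rewrite /f => e; apply/val_inj/eqP => /=; apply/negP => nij.
  case: (ltngtP i j) => h; last by rewrite h eqxx in nij.
    have ej : (j : nat) = (i + (j - i))%N by rewrite subnKC // ltnW.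
    move: e; rewrite ej GRing.exprD -{1}(GRing.mulr1 (_ ^+ i)%R) => /GRing.mulfI.
    move=> /(_ (GRing.expf_neq0 _ t0)) /esym /eqP.
    apply/negP/pow_neq1 => //; rewrite subn_gt0 h /=.
    have := ltn_ord j; lia.
  have ei : (i : nat) = (j + (i - j))%N by rewrite subnKC // ltnW.
  move: e; rewrite ei GRing.exprD -{2}(GRing.mulr1 (_ ^+ j)%R) => /GRing.mulfI.
  move=> /(_ (GRing.expf_neq0 _ t0)) /eqP.
  apply/negP/pow_neq1 => //; rewrite subn_gt0 h /=.
  have := ltn_ord i; lia.
pose A := f @: [set: 'I_p.-1].
have A0 : (0 : 'F_p)%R \notin A.
  apply/imsetP => -[i _] e; move: (GRing.expf_neq0 i t0); by rewrite -/(f i) -e eqxx.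
have cA : #|A| = p.-1 by rewrite card_imset // cardsT card_ord.
have AT : (0 : 'F_p)%R |: A = [set: 'F_p].
  apply/eqP; rewrite eqEcard subsetT cardsT card_Fp // cardsU1 A0 cA.
  have := prime_gt1 pr; lia.
have : x \in (0 : 'F_p)%R |: A by rewrite AT in_setT.
rewrite in_setU1 (negbTE x0) /= => /imsetP [i _ ->].
by exists i.
Qed.

Theorem lemma6 (a b n p : nat) :
  a < 10 -> b < 10 -> a != b -> 2 <= n ->
  absolute_prime (B n a b) ->
  prime p -> p != 2 -> p != 5 ->
  p.-1 < n ->
  is_order10 p p.-1 ->
  coprime a p ->
  p.-1 %| n.
Proof.
move=> Ha Hb Hab Hn [s [[sd sh se] Hperm]] pr p2 p5 Hpn [_ H1 Hk] cop.
have p3 : p != 3.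
  apply/eqP => e; have := Hk 1; rewrite e => /(_ erefl); by [].
have p7 : 7 <= p.
  clear -pr p2 p3 p5; move: pr p2 p3 p5; case: p => [|[|[|[|[|[|[|p']]]]]]] //.
have a0 : 0 < a.
  rewrite lt0n; apply/negP => /eqP e; move: cop; rewrite e /coprime gcd0n => /eqP ep; lia.
have [n1 En] : exists n1, n = n1.+1 by exists n.-1; lia.
subst n.
have n16 : 6 <= n1 by lia.
pose s0 := nseq n1 a ++ [:: b].
have hs0 : s = s0.
  apply: fd_uniq => //.
  - by rewrite all_cat all_nseq Ha orbT /= Hb.
  - by rewrite /s0; case: (n1) n16 => //= ? _; rewrite -lt0n.
  rewrite se /s0 fd_cat fd_nseq /B repunitE FS fd_cons /= expn0 muln1 addn0.
  nia.
have key : forall k m, m + k = n1 ->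
   [/\ prime (fromdigits (nseq m a ++ b :: nseq k a)),
       fromdigits (nseq m a ++ b :: nseq k a) + a * 10 ^ k = a * F n1.+1 + b * 10 ^ k
     & 10 * (n1 - 1) + 1 <= fromdigits (nseq m a ++ b :: nseq k a)].
  move=> k m hmk.
  have eF : F n1.+1 = F m * 10 ^ k.+1 + F k.+1 by rewrite -hmk -addnS FD.
  have eF1 : F k.+1 = 10 ^ k + F k by rewrite /F /= fd_cons size_nseq mul1n.
  have eV : fromdigits (nseq m a ++ b :: nseq k a) = a * F m * 10 ^ k.+1 + b * 10 ^ k + a * F k.
    by rewrite fd_cat fd_cons !fd_nseq /= size_nseq addnA.
  split.
  - apply: Hperm; rewrite hs0 /s0; apply/permP => P.
    rewrite !count_cat /= !count_nseq -hmk; lia.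
  - rewrite eV eF eF1 expnS; nia.
  - have e1 : F n1 = F (n1 - 1) * 10 + 1 by rewrite -FS; congr F; lia.
    have e2 : F n1 = F m * 10 ^ k + F k by rewrite -hmk FD.
    have g1 := F_ge (n1 - 1).
    have g2 : F m * 10 ^ k <= F m * 10 ^ k.+1 by rewrite leq_mul2l leq_exp2l // leqnSn orbT.
    have g3 : F m * 10 ^ k.+1 + F k <= a * F m * 10 ^ k.+1 + a * F k.
      rewrite -mulnA; apply: leq_add; rewrite leq_pmull //.
    rewrite eV; lia.
have oddV : forall k m, m + k = n1 -> odd (fromdigits (nseq m a ++ b :: nseq k a)).
  move=> k m hmk; have [hp _ hb] := key k m hmk.
  case: (even_prime hp) => // e; move: hb; rewrite e; lia.
have oF : odd (F n1.+1) by rewrite FS oddD oddM andbF.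
have ob : odd b.
  have [_ e _] := key 0 n1 (addn0 _).
  have := oddV 0 n1 (addn0 _); move/(congr1 odd): e.
  rewrite !oddD !oddM oF expn0 /=.
  by case: (odd a); case: (odd b); case: (odd (fromdigits _)).
have oa : odd a.
  have [_ e _] := key n1 0 (add0n _).
  have := oddV n1 0 (add0n _); move/(congr1 odd): e.
  rewrite !oddD !oddM oF !oddX /=; case: (n1) n16 => //= ? _.
  by case: (odd a); case: (odd b); case: (odd (fromdigits _)).
have bp : b %% p != a %% p.
  case: (leqP 10 p) => hp.
    by rewrite !modn_small // ?(leq_trans Ha) ?(leq_trans Hb) // eq_sym.
  have -> : p = 7.
    clear -pr p7 hp; move: pr p7 hp; case: p => [|[|[|[|[|[|[|[|[|[|p']]]]]]]]]] //.
  clear -Ha Hb Hab oa ob; move: Ha Hb Hab oa ob.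
  by case: a => [|[|[|[|[|[|[|[|[|[|a']]]]]]]]]]; case: b => [|[|[|[|[|[|[|[|[|[|b']]]]]]]]]].
apply/idPn => nd.
have a'0 : ((a%:R : 'F_p) != 0)%R.
  by rewrite -GRing.unitfE unitFpE // coprime_sym.
have t0 : ((10%:R : 'F_p) != 0)%R.
  rewrite -GRing.unitfE unitFpE // prime_coprime //.
  apply/negP => h; have : p %| 2 * 5 by []. rewrite Euclid_dvdM // => /orP [].
    by rewrite dvdn_prime2 // (negbTE p2).
  by rewrite dvdn_prime2 // (negbTE p5).
have ba0 : ((b%:R : 'F_p) - a%:R != 0)%R.
  rewrite GRing.subr_eq0; apply/eqP => /(castP _ _ _ pr) e.
  by rewrite e eqxx in bp.
have F0 : (((F n1.+1)%:R : 'F_p) != 0)%R.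
  apply/eqP => e0.
  have e9 := congr1 (fun z => (z%:R : 'F_p)%R) (F9 n1.+1).
  rewrite /= GRing.natrD GRing.natrM e0 GRing.mulr0 GRing.add0r GRing.natrX in e9.
  have hp1 : ((10%:R : 'F_p) ^+ p.-1 = 1)%R.
    rewrite -GRing.natrX; by apply/(castP _ _ 1 pr).
  have r0 : 0 < n1.+1 %% p.-1.
    rewrite lt0n; apply: contra nd; by [].
  have r1 : n1.+1 %% p.-1 < p.-1 by rewrite ltn_pmod //; lia.
  have hr : ((10%:R : 'F_p) ^+ (n1.+1 %% p.-1) = 1)%R.
    move: e9; rewrite {1}(divn_eq n1.+1 p.-1) GRing.exprD mulnC GRing.exprM hp1 GRing.expr1n GRing.mul1r.
    by move=> <-.
  have := pow_neq1 p (n1.+1 %% p.-1) pr Hk; by rewrite r0 r1 hr eqxx => /(_ erefl).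
pose x := (- ((a%:R : 'F_p) * (F n1.+1)%:R) / ((b%:R : 'F_p) - a%:R))%R.
have x0 : (x != 0)%R.
  rewrite /x; apply: GRing.mulf_neq0; [rewrite GRing.oppr_eq0; exact: (GRing.mulf_neq0 a'0 F0) | by rewrite GRing.invr_eq0].
have [k kp ek] := gen p pr Hk t0 x x0.
have kn : k <= n1 by clear -kp Hpn; lia.
have [hp e hb] := key k (n1 - k) (subnK kn).
have := congr1 (fun z => (z%:R : 'F_p)%R) e.
rewrite /= !GRing.natrD !GRing.natrM !GRing.natrX ek /x => e'.
have V0 : ((fromdigits (nseq (n1 - k) a ++ b :: nseq k a))%:R : 'F_p)%R = 0%R.
  apply: (GRing.addIr ((a%:R : 'F_p) * (- ((a%:R : 'F_p) * (F n1.+1)%:R) / ((b%:R : 'F_p) - a%:R))))%R.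
  rewrite e' GRing.add0r; field; exact: ba0.
move/(castP _ _ 0 pr): V0; rewrite mod0n => /eqP hd; move: (hd : p %| _); rewrite dvdn_prime2 // => /eqP ep.
  clear -hb ep n16 Hpn; move: hb; rewrite -ep; lia.
Qed.
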